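(* The evaluation homomorphism $\mathrm{ev}:Y\to U(\mathfrak{gl}_{1|1})$ factors to a surjective algebra homomorphism $\mathrm{ev}^{[p]}:Y^{[p]}\to U^{[p]}(\mathfrak{gl}_{1|1})$.
   Context: Let $k$ be an algebraically closed field of characteristic $p>2$, parities $|1|=0$, $|2|=1$. $Y=Y_{1|1}$ is the superalgebra over $k$ with generators $t_{i,j}^{(r)}$ ($1\le i,j\le2$, $r>0$, parity $|i|+|j|$) and relations $[t_{i,j}^{(r)},t_{k,l}^{(s)}]=(-1)^{|i||j|+|i||k|+|j||k|}\sum_{t=0}^{\min(r,s)-1}(t_{k,j}^{(t)}t_{i,l}^{(r+s-1-t)}-t_{k,j}^{(r+s-1-t)}t_{i,l}^{(t)})$, $t_{i,j}^{(0)}=\delta_{ij}$; $t_{i,j}(u)=\sum_{r\ge0}t_{i,j}^{(r)}u^{-r}$. Define $d_1,d_2,e,f$ by $t_{1,1}=d_1$, $t_{1,2}=d_1e$, $t_{2,1}=fd_1$, $t_{2,2}=fd_1e+d_2$; $b_1(u)=d_1(u)d_1(u-1)\cdots d_1(u-p+1)$, $b_2(u)=d_2(u)^{-1}\cdots d_2(u-p+1)^{-1}$ with coefficients $b_i^{(r)}$. The restricted super Yangian is $Y^{[p]}=Y/YZ_p(Y)_+$, where $Z_p(Y)_+$ is the ideal of the central subalgebra $Z_p(Y)$ generated by the $b_i^{(rp)}$ ($i=1,2$, $r>0$) generated by these elements. The evaluation homomorphism $\mathrm{ev}:Y\to U(\mathfrak{gl}_{1|1})$ is the surjective homomorphism with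 $\mathrm{ev}(t_{i,j}(u))=\delta_{i,j}+(-1)^{|i|}e_{i,j}u^{-1}$, $e_{i,j}$ the elementary matrices. $J_p$ is the ideal of $U(\mathfrak{gl}_{1|1})$ generated by the central elements $e_{i,i}^p-e_{i,i}$ ($i=1,2$), and $U^{[p]}(\mathfrak{gl}_{1|1})=U(\mathfrak{gl}_{1|1})/J_p$ is the restricted enveloping algebra. *)

(* Defs.v *)
From HB Require Import structures.
From mathcomp Require Import all_boot all_order all_algebra.
Set Implicit Arguments. Unset Strict Implicit. Unset Printing Implicit Defensive.
Import GRing.Theory.
Local Open Scope ring_scope.

(** * Formal power series in u^{-1} with (noncommutative) coefficients.
    A series is its coefficient function: f n = coefficient of u^{-n}. *)
Section Series.
Variable R : nzRingType.

Definition sone : nat -> R := fun n => (n == 0)%:R.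
Definition ssub (f g : nat -> R) : nat -> R := fun n => f n - g n.
Definition smul (f g : nat -> R) : nat -> R :=
  fun n => \sum_(i < n.+1) f i * g (n - i)%N.
Fixpoint spow (f : nat -> R) (m : nat) : nat -> R :=
  if m is m'.+1 then smul f (spow f m') else sone.
(** inverse of a series with constant term 1: sum_m (1 - f)^m
    (the m-th power has no coefficients below u^{-m}). *)
Definition sinv (f : nat -> R) : nat -> R :=
  fun n => \sum_(m < n.+1) spow (ssub sone f) m n.
(** substitution u |-> u - a:  (u-a)^{-r} = sum_{n>=r} C(n-1,n-r) a^{n-r} u^{-n} *)
Definition sshift (a : nat) (f : nat -> R) : nat -> R :=
  fun n => if n == 0%N then f 0%N else
    \sum_(r < n) ('C(n.-1, (n.-1 - r)%N) * a ^ (n.-1 - r))%N%:R * f r.+1.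
End Series.

(** parities: index 0 <-> "1" (even), index 1 <-> "2" (odd) *)
Definition par (i : 'I_2) : nat := (i == 1 :> 'I_2).
Definition sgn (R : nzRingType) (n : nat) : R := (-1) ^+ n.

Definition tser (R : nzRingType) (t : 'I_2 -> 'I_2 -> nat -> R) (i j : 'I_2) :
  nat -> R := fun r => if r == 0%N then (i == j)%:R else t i j r.

Definition YRel (R : nzRingType) (t : 'I_2 -> 'I_2 -> nat -> R) : Prop :=
  forall (i j a b : 'I_2) (r s : nat), (0 < r)%N -> (0 < s)%N ->
    t i j r * t a b s
      - sgn R ((par i + par j) * (par a + par b)) * t a b s * t i j r
    = sgn R (par i * par j + par i * par a + par j * par a)
      * \sum_(m < minn r s)
          (tser t a j m * tser t i b (r + s - 1 - m)
           - tser t a j (r + s - 1 - m) * tser t i b m).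

Definition URel (R : nzRingType) (e : 'I_2 -> 'I_2 -> R) : Prop :=
  forall (i j a b : 'I_2),
    e i j * e a b - sgn R ((par i + par j) * (par a + par b)) * e a b * e i j
    = (j == a)%:R * e i b
      - sgn R ((par i + par j) * (par a + par b)) * (i == b)%:R * e a j.

Definition alg_hom (k : fieldType) (A B : algType k) (f : A -> B) : Prop :=
  (forall x y, f (x + y) = f x + f y) /\ (forall (c : k) x, f (c *: x) = c *: f x)
  /\ f 1 = 1 /\ (forall x y, f (x * y) = f x * f y).

Definition surj (A B : Type) (f : A -> B) : Prop := forall z, exists y, f y = z.

(** (Y, t) is the algebra presented by generators t_{ij}^{(r)} (r>0) and the
    relations YRel (universal property). *)
Definition is_Yangian (k : fieldType) (Y : algType k)
    (t : 'I_2 -> 'I_2 -> nat -> Y) : Prop :=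
  YRel t /\
  (forall (B : algType k) (t' : 'I_2 -> 'I_2 -> nat -> B), YRel t' ->
     exists f : Y -> B, alg_hom f /\
       forall i j r, (0 < r)%N -> f (t i j r) = t' i j r) /\
  (forall (B : algType k) (f g : Y -> B), alg_hom f -> alg_hom g ->
     (forall i j r, (0 < r)%N -> f (t i j r) = g (t i j r)) -> forall y, f y = g y).

(** (U, e) is U(gl_{1|1}), presented by generators e_{ij} and relations URel. *)
Definition is_Ugl11 (k : fieldType) (U : algType k) (e : 'I_2 -> 'I_2 -> U) : Prop :=
  URel e /\
  (forall (B : algType k) (e' : 'I_2 -> 'I_2 -> B), URel e' ->
     exists f : U -> B, alg_hom f /\ forall i j, f (e i j) = e' i j) /\
  (forall (B : algType k) (f g : U -> B), alg_hom f -> alg_hom g ->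
     (forall i j, f (e i j) = g (e i j)) -> forall x, f x = g x).

(** Gauss decomposition: d_1(u) = t_{11}(u),
    d_2(u) = t_{22}(u) - t_{21}(u) t_{11}(u)^{-1} t_{12}(u). *)
Definition d1ser (R : nzRingType) (t : 'I_2 -> 'I_2 -> nat -> R) : nat -> R :=
  tser t 0 0.
Definition d2ser (R : nzRingType) (t : 'I_2 -> 'I_2 -> nat -> R) : nat -> R :=
  ssub (tser t 1 1) (smul (smul (tser t 1 0) (sinv (tser t 0 0))) (tser t 0 1)).

Definition bser (R : nzRingType) (p : nat) (t : 'I_2 -> 'I_2 -> nat -> R)
    (i : 'I_2) : nat -> R :=
  if i == 0 :> 'I_2 then \big[@smul R/@sone R]_(a < p) sshift a (d1ser t)
  else \big[@smul R/@sone R]_(a < p) sinv (sshift a (d2ser t)).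

Definition in_lideal (R : nzRingType) (S : R -> Prop) (x : R) : Prop :=
  exists n (a g : 'I_n -> R), (forall m, S (g m)) /\ x = \sum_(m < n) a m * g m.

Definition in_ideal (R : nzRingType) (S : R -> Prop) (x : R) : Prop :=
  exists n (a g c : 'I_n -> R), (forall m, S (g m)) /\
    x = \sum_(m < n) a m * g m * c m.

(* Main.v *)
Require Import Defs.
From HB Require Import structures.
From mathcomp Require Import all_boot all_order all_algebra.
From mathcomp Require Import boolp.
From mathcomp Require Import ring zify.
Set Implicit Arguments. Unset Strict Implicit. Unset Printing Implicit Defensive.
Import GRing.Theory.
Local Open Scope ring_scope.

Section SerRing.
Variable C : comNzRingType.
Definition ser := nat -> C.
HB.instance Definition _ := Choice.on ser.
Definition sadd (f g : ser) : ser := fun n => f n + g n.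
Definition sopp (f : ser) : ser := fun n => - f n.
Definition szero : ser := fun _ => 0.
Lemma saddA : associative sadd.
Proof. by move=> f g h; apply: funext => n; rewrite /sadd addrA. Qed.
Lemma saddC : commutative sadd.
Proof. by move=> f g; apply: funext => n; rewrite /sadd addrC. Qed.
Lemma sadd0 : left_id szero sadd.
Proof. by move=> f; apply: funext => n; rewrite /sadd add0r. Qed.
Lemma saddN : left_inverse szero sopp sadd.
Proof. by move=> f; apply: funext => n; rewrite /sadd /sopp addNr. Qed.
HB.instance Definition _ := GRing.isZmodule.Build ser saddA saddC sadd0 saddN.

Definition Tr (m : nat) (f : ser) : {poly C} := \poly_(i < m.+1) f i.

Lemma smulE (f g : ser) n m : (n <= m)%N -> smul f g n = (Tr m f * Tr m g)`_n.
Proof.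
move=> nm; rewrite coefM /smul; apply: eq_bigr => i _.
rewrite !coef_poly.
have h1 : (i < m.+1)%N by apply: leq_trans (ltn_ord i) _.
have h2 : (n - i < m.+1)%N by rewrite ltnS; apply: leq_trans (leq_subr _ _) nm.
by rewrite h1 h2.
Qed.

Lemma smulA : associative (@smul C : ser -> ser -> ser).
Proof.
move=> f g h; apply: funext => n.
have -> : smul f (smul g h) n = (Tr n f * (Tr n g * Tr n h))`_n.
  rewrite coefM /smul; apply: eq_bigr => i _.
  rewrite -(smulE g h (leq_subr i n)) coef_poly.
  by rewrite (ltn_ord i).
have -> : smul (smul f g) h n = ((Tr n f * Tr n g) * Tr n h)`_n.
  rewrite coefM /smul; apply: eq_bigr => i _.
  rewrite -(smulE f g (ltnSE (ltn_ord i))) coef_poly.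
  have h2 : (n - i < n.+1)%N by rewrite ltnS leq_subr.
  by rewrite h2.
by rewrite mulrA.
Qed.

Lemma smulC : commutative (@smul C : ser -> ser -> ser).
Proof. by move=> f g; apply: funext => n; rewrite !(smulE _ _ (leqnn n)) mulrC. Qed.

Lemma smul1 : left_id (@sone C : ser) (@smul C).
Proof.
move=> f; apply: funext => n; rewrite /smul big_ord_recl /= /sone /= mul1r subn0.
by rewrite big1 ?addr0 // => i _; rewrite mul0r.
Qed.

Lemma smulDl : left_distributive (@smul C : ser -> ser -> ser) +%R.
Proof.
move=> f g h; apply: funext => n.
rewrite /smul /=.
have E : forall (u v : ser) m, (u + v) m = u m + v m by [].
rewrite E -big_split /=; apply: eq_bigr => i _; rewrite E; exact: mulrDl.
Qed.

Lemma sone_neq0 : (@sone C : ser) != 0.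
Proof.
apply/eqP => /(congr1 (fun f : ser => f 0%N)); rewrite /sone /= => /eqP.
by rewrite oner_eq0.
Qed.

HB.instance Definition _ := GRing.Zmodule_isComNzRing.Build ser smulA smulC smul1 smulDl sone_neq0.

Lemma serM (f g : ser) n : (f * g) n = \sum_(i < n.+1) f i * g (n - i)%N.
Proof. by []. Qed.
Lemma serD (f g : ser) n : (f + g) n = f n + g n. Proof. by []. Qed.
Lemma serN (f : ser) n : (- f) n = - f n. Proof. by []. Qed.
Lemma serB (f g : ser) n : (f - g) n = f n - g n. Proof. by []. Qed.
Lemma ser1 n : (1 : ser) n = (n == 0%N)%:R. Proof. by []. Qed.
Lemma ser0 n : (0 : ser) n = 0. Proof. by []. Qed.

End SerRing.

Section SerLemmas.
Variable C : comNzRingType.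
Local Notation S := (ser C).
Implicit Types (f g h : S) (c : C).

Definition cst c : S := fun n => if n == 0%N then c else 0.
Definition sX : S := fun n => (n == 1%N)%:R.
Definition geo c : S := fun n => c ^+ n.

Lemma cst_mulE c f n : (cst c * f) n = c * f n.
Proof.
rewrite serM big_ord_recl /= subn0 /cst /=.
by rewrite big1 ?addr0 // => i _; rewrite mul0r.
Qed.

Lemma sX_mulE f n : (sX * f) n = if n is n'.+1 then f n' else 0.
Proof.
rewrite serM big_ord_recl /= mul0r add0r; case: n => [|n]; first by rewrite big_ord0.
rewrite big_ord_recl /= mul1r subSS subn0 big1 ?addr0 // => i _.
by rewrite /sX /bump /= mul0r.
Qed.

Lemma cstD c d : cst (c + d) = cst c + cst d.
Proof. by apply: funext => n; rewrite serD /cst; case: (n == 0)%N; rewrite ?addr0. Qed.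
Lemma cstN c : cst (- c) = - cst c.
Proof. by apply: funext => n; rewrite serN /cst; case: (n == 0)%N; rewrite ?oppr0. Qed.
Lemma cstB c d : cst (c - d) = cst c - cst d.
Proof. by rewrite cstD cstN. Qed.
Lemma cst1 : cst 1 = 1.
Proof. by apply: funext => n; rewrite ser1 /cst; case: (n == 0)%N. Qed.
Lemma cst0 : cst 0 = 0.
Proof. by apply: funext => n; rewrite /cst; case: (n == 0)%N. Qed.
Lemma cstM c d : cst (c * d) = cst c * cst d.
Proof.
apply: funext => n; rewrite cst_mulE /cst; case: (n == 0)%N => //; by rewrite mulr0.
Qed.
Lemma cst_nat m : cst m%:R = m%:R.
Proof. by elim: m => [|m IH]; rewrite ?cst0 // !mulrS cstD cst1 IH. Qed.
Lemma cstX c m : cst (c ^+ m) = cst c ^+ m.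
Proof. by elim: m => [|m IH]; rewrite ?cst1 // !exprS cstM IH. Qed.

Lemma sX_reg f : sX * f = 0 -> f = 0.
Proof.
move=> H; apply: funext => n.
by move: (congr1 (fun g : S => g n.+1) H); rewrite sX_mulE.
Qed.

Lemma spowE f m : spow f m = f ^+ m.
Proof. by elim: m => [|m IH] //=; rewrite exprS IH. Qed.

Lemma pow_low g m n : g 0%N = 0 -> (n < m)%N -> (g ^+ m) n = 0.
Proof.
move=> g0; elim: m n => [//|m IH] n lt.
rewrite exprS serM big1 // => i _.
case: (posnP i) => [i0|ip]; first by rewrite i0 g0 mul0r.
rewrite IH ?mulr0 //.
have := ltn_ord i; move: lt ip; set j := nat_of_ord i; lia.
Qed.

Lemma sum_coef (I : Type) (r : seq I) (P : pred I) (F : I -> S) n :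
  (\sum_(i <- r | P i) F i) n = \sum_(i <- r | P i) F i n.
Proof. by apply: (big_morph (fun g : S => g n)) => //. Qed.

Lemma mul_coef_low f g1 g2 n : (forall m, (m <= n)%N -> g1 m = g2 m) ->
  (f * g1) n = (f * g2) n.
Proof. by move=> H; rewrite !serM; apply: eq_bigr => i _; rewrite H ?leq_subr. Qed.

Lemma sinvE f : f 0%N = 1 -> f * sinv f = 1.
Proof.
move=> f0; apply: funext => n.
pose G : S := \sum_(m < n.+1) (1 - f) ^+ m.
have -> : (f * sinv f) n = (f * G) n.
  apply: mul_coef_low => m mn; rewrite /sinv /G sum_coef.
  have -> : ssub (@sone C) f = 1 - f by [].
  rewrite (big_ord_widen n.+1 (fun i => spow (1 - f) i m)) ?ltnS // big_mkcond /=.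
  apply: eq_bigr => i _; rewrite spowE; case: ifP => // /negbT.
  by rewrite -leqNgt => lt; rewrite pow_low // serB f0 ser1 subrr.
have -> : f * G = 1 - (1 - f) ^+ n.+1.
  have := subrX1 (1 - f) n.+1; rewrite -/G => E.
  rewrite -[RHS]opprB E; ring.
by rewrite serB pow_low ?subr0 // serB f0 ser1 subrr.
Qed.

Lemma geoE c : (1 - cst c * sX) * geo c = 1.
Proof.
apply: funext => n; rewrite mulrBl mul1r serB -mulrA cst_mulE sX_mulE /geo ser1.
by case: n => [|n]; rewrite ?mulr0 ?subr0 ?expr0 // exprS subrr.
Qed.

Lemma unit_cancel f g h : f 0%N = 1 -> g * f = h * f -> g = h.
Proof.
move=> f0 E; have := sinvE f0.
by move=> I; rewrite -[g]mulr1 -[h]mulr1 -I !mulrA E.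
Qed.

End SerLemmas.

Section Shift.
Variable C : comNzRingType.
Local Notation S := (ser C).
Implicit Types (f g h : S) (c : C).

Lemma sshift0 a f : sshift a f 0%N = f 0%N. Proof. by []. Qed.
Lemma sshiftS a f n : sshift a f n.+1 =
  \sum_(r < n.+1) 'C(n, r)%:R * (a%:R) ^+ (n - r) * f r.+1.
Proof.
rewrite /sshift (_ : (n.+1 == 0)%N = false) //; apply: eq_bigr => r _.
rewrite -[n.+1.-1]/n bin_sub; last exact: ltn_ord r.
by rewrite natrM natrX.
Qed.

Lemma sshiftD a f g : sshift a (f + g) = (sshift a f : S) + sshift a g.
Proof.
apply: funext => -[|n]; rewrite serD ?sshift0 // !sshiftS -big_split /=.
by apply: eq_bigr => r _; rewrite serD mulrDr.
Qed.

Lemma sshiftC a c f : sshift a (cst c * f) = cst c * (sshift a f : S).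
Proof.
apply: funext => -[|n]; rewrite cst_mulE ?sshift0 ?cst_mulE // !sshiftS mulr_sumr.
by apply: eq_bigr => r _; rewrite cst_mulE; ring.
Qed.

Lemma sshift1 a : @sshift C a (1%R : ser C) = 1%R :> ser C.
Proof.
apply: funext => -[|n]; rewrite ?sshift0 // sshiftS ser1 big1 // => r _.
by rewrite ser1 mulr0.
Qed.

Lemma sXgeoE c n : (sX C * geo c) n = if n is n'.+1 then c ^+ n' else 0.
Proof. by rewrite sX_mulE. Qed.

Lemma sshiftX a : sshift a (sX C) = sX C * geo a%:R.
Proof.
apply: funext => -[|n]; rewrite ?sXgeoE ?sshift0 // sshiftS big_ord_recl /=.
rewrite /sX /= bin0 mulr1 subn0 mul1r big1 ?addr0 // => r _.
by rewrite /bump /= mulr0.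
Qed.

Lemma sX2E f n : (sX C ^+ 2 * f) n = if n is n'.+2 then f n' else 0.
Proof. by rewrite expr2 -mulrA sX_mulE; case: n => // n; rewrite sX_mulE. Qed.

Lemma sshiftX2 a q :
  (1 - cst a%:R * sX C) * (sshift a (sX C ^+ 2 * geo q) : S) = sX C ^+ 2 * geo (a%:R + q).
Proof.
set s := sshift a _.
have s0 : s 0%N = 0 by rewrite /s sshift0 sX2E.
have s1 : s 1%N = 0 by rewrite /s sshiftS big_ord1 sX2E mulr0.
have sS : forall m, s m.+2 = \sum_(r < m.+1) 'C(m.+1, r.+1)%:R * (a%:R) ^+ (m - r) * q ^+ r.
  move=> m; rewrite /s sshiftS big_ord_recl sX2E mulr0 add0r.
  by apply: eq_bigr => r _; rewrite sX2E /geo /bump /=.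
apply: funext => n; rewrite mulrBl mul1r serB -mulrA cst_mulE sX_mulE sX2E.
case: n => [|[|m]]; rewrite ?s0 ?s1 ?mulr0 ?subr0 //.
case: m => [|m].
  by rewrite sS s1 big_ord1 mulr0 subr0 /geo /= binn !expr0 !mulr1.
rewrite !sS /geo exprDn.
have E1 : \sum_(r < m.+2) 'C(m.+2, r.+1)%:R * (a%:R) ^+ (m.+1 - r) * q ^+ r =
   \sum_(r < m.+2) 'C(m.+1, r.+1)%:R * (a%:R) ^+ (m.+1 - r) * q ^+ r +
   \sum_(r < m.+2) 'C(m.+1, r)%:R * (a%:R) ^+ (m.+1 - r) * q ^+ r.
  by rewrite -big_split /=; apply: eq_bigr => r _; rewrite binS natrD; ring.
have E3 : \sum_(r < m.+2) 'C(m.+1, r.+1)%:R * (a%:R) ^+ (m.+1 - r) * q ^+ r =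
   (a%:R : C) * \sum_(r < m.+1) 'C(m.+1, r.+1)%:R * (a%:R) ^+ (m - r) * q ^+ r.
  rewrite big_ord_recr /= bin_small; last by [].
  rewrite mul0r mul0r addr0 mulr_sumr; apply: eq_bigr => i _.
  rewrite subSn; last by rewrite -ltnS; exact: ltn_ord i.
  by rewrite exprS; ring.
rewrite E1 E3 addrAC subrr add0r; apply: eq_bigr => i _; rewrite mulr_natl; ring.
Qed.

End Shift.

Lemma prodXa (k : fieldType) (p : nat) : prime p -> p \in [pchar k] ->
  \prod_(a < p) ('X - ((a : nat)%:R : k)%:P) = 'X^p - 'X.
Proof.
move=> pp chp.
have p1 : (1 < p)%N by apply: prime_gt1.
set rs := map (fun a : 'I_p => ((a : nat)%:R : k)) (index_enum 'I_p).
have szP : size ('X^p - 'X : {poly k}) = p.+1.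
  by rewrite size_addl ?size_polyXn // size_opp size_polyX ltnS.
have lcP : lead_coef ('X^p - 'X : {poly k}) = 1.
  by rewrite lead_coefDl ?lead_coefXn // size_polyXn size_opp size_polyX ltnS.
have := @all_roots_prod_XsubC _ ('X^p - 'X) rs.
rewrite lcP scale1r => ->.
- by rewrite /rs big_map.
- by rewrite szP /rs size_map /index_enum /= -enumT size_enum_ord.
- apply/allP => z /mapP [a _ ->].
  by rewrite /root !hornerE -(pFrobenius_autE chp) pFrobenius_aut_nat subrr.
- rewrite uniq_rootsE map_inj_in_uniq ?index_enum_uniq //.
  move=> a b _ _ /eqP.
  wlog ab : a b / (a <= b)%N.
    move=> H; case: (leqP a b) => [/H//|/ltnW ba]; rewrite eq_sym => /(H _ _ ba) ->//.
  rewrite eq_sym -subr_eq0 -natrB // -(dvdn_pcharf chp) => dv.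
  have lt : (b - a < p)%N by apply: leq_ltn_trans (leq_subr _ _) (ltn_ord b).
  have : (b - a == 0)%N.
    case: (posnP (b - a)) => [h|h]; first by apply/eqP.
    by move: (dvdn_leq h dv); rewrite leqNgt lt.
  by rewrite subn_eq0 => ba; apply/val_inj/eqP; rewrite eqn_leq ab ba.
Qed.

Section Homog.
Variables (k : fieldType) (R : comNzRingType) (iota : k -> R).
Implicit Types (P : {poly k}) (Z W : R).
Hypothesis iotaD : forall u v, iota (u + v) = iota u + iota v.
Hypothesis iota1 : iota 1 = 1.

Lemma iota0 : iota 0 = 0.
Proof. by apply: (addrI (iota 0)); rewrite -iotaD !addr0. Qed.
Lemma iotaN u : iota (- u) = - iota u.
Proof. by apply: (addrI (iota u)); rewrite -iotaD !subrr iota0. Qed.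
Lemma iotaB u v : iota (u - v) = iota u - iota v.
Proof. by rewrite iotaD iotaN. Qed.
Lemma iota_natM n u : iota (n%:R * u) = n%:R * iota u.
Proof.
elim: n => [|n IH]; first by rewrite !mul0r iota0.
by rewrite -{1}addn1 natrD mulrDl mul1r iotaD IH -addn1 natrD mulrDl mul1r.
Qed.
Lemma iota_nat n : iota n%:R = n%:R.
Proof. by rewrite -[n%:R]mulr1 iota_natM iota1 mulr1. Qed.

Definition Hm (d : nat) (P : {poly k}) (Z W : R) :=
  \sum_(j < d.+1) iota (P`_j) * Z ^+ j * W ^+ (d - j).

Lemma Hstep d P (a : nat) Z W : (size P <= d.+1)%N ->
  Hm d.+1 (('X - (a%:R)%:P) * P) Z W = (Z - a%:R * W) * Hm d P Z W.
Proof.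
move=> sP; rewrite /Hm.
have E : forall j : 'I_d.+2, iota ((('X - (a%:R)%:P) * P)`_j) * Z ^+ j * W ^+ (d.+1 - j)
   = iota (('X * P)`_j) * Z ^+ j * W ^+ (d.+1 - j)
     - a%:R * (iota (P`_j) * Z ^+ j * W ^+ (d.+1 - j)).
  move=> j; rewrite mulrBl coefB coefCM iotaB iota_natM; ring.
rewrite (eq_bigr _ (fun j _ => E j)) sumrB mulrBl; congr (_ - _).
  rewrite big_ord_recl coefXM /= iota0 !mul0r add0r mulr_sumr.
  apply: eq_bigr => i _; rewrite coefXM /= /bump /= add1n subSS exprS; ring.
rewrite big_ord_recr /= nth_default // iota0 !mul0r mulr0 addr0 mulr_sumr.
apply: eq_bigr => i _; rewrite subSn; last by rewrite -ltnS; exact: ltn_ord i.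
by rewrite exprS; ring.
Qed.

Lemma Hprod n Z W :
  Hm n (\prod_(a < n) ('X - ((a : nat)%:R)%:P)) Z W = \prod_(a < n) (Z - (a : nat)%:R * W).
Proof.
elim: n => [|n IH].
  by rewrite !big_ord0 /Hm big_ord1 coefC /= iota1 !expr0 !mulr1.
rewrite !big_ord_recr /= mulrC Hstep; first by rewrite IH mulrC.
by rewrite size_prod_XsubC /index_enum /= -enumT size_enum_ord.
Qed.

Lemma Hmono d m Z W : (m <= d)%N ->
  \sum_(j < d.+1) iota ((j == m :> nat)%:R) * Z ^+ j * W ^+ (d - j) = Z ^+ m * W ^+ (d - m).
Proof.
move=> md; have md' : (m < d.+1)%N by [].
rewrite (bigD1 (Ordinal md')) //= eqxx iota1 mul1r big1 ?addr0 // => j /negbTE H.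
have -> : (j == m :> nat) = false.
  by apply/negbTE; apply: contraFN H => /eqP e; apply/eqP/val_inj.
by rewrite iota0 !mul0r.
Qed.

Lemma HXp (p : nat) Z W : (1 < p)%N ->
  Hm p ('X^p - 'X) Z W = Z ^+ p - Z * W ^+ p.-1.
Proof.
move=> p1; rewrite /Hm.
have E : forall j : 'I_p.+1, iota (('X^p - 'X : {poly k})`_j) * Z ^+ j * W ^+ (p - j)
   = iota ((j == p :> nat)%:R) * Z ^+ j * W ^+ (p - j)
     - iota ((j == 1%N :> nat)%:R) * Z ^+ j * W ^+ (p - j).
  by move=> j; rewrite coefB coefXn coefX iotaB mulrBl mulrBl.
rewrite (eq_bigr _ (fun j _ => E j)) sumrB !Hmono ?subnn ?expr0 ?mulr1 ?expr1 //; last exact: ltnW.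
by rewrite subn1.
Qed.

End Homog.

Section ProdLemmas.
Variable C : comNzRingType.
Local Notation S := (ser C).

Lemma split_idem n (u : S) (A B : nat -> S) : u * u = u ->
  \prod_(a < n) (A a + u * B a) = (1 - u) * \prod_(a < n) A a + u * \prod_(a < n) (A a + B a).
Proof.
move=> uu; elim: n => [|n IH]; first by rewrite !big_ord0; ring.
rewrite !big_ord_recr /= IH.
set PA := \prod_(i < n) A i; set PB := \prod_(i < n) (A i + B i).
apply/eqP; rewrite -subr_eq0; apply/eqP.
have -> : ((1 - u) * PA + u * PB) * (A n + u * B n) -
   ((1 - u) * (PA * A n) + u * (PB * (A n + B n))) = (u * u - u) * (PB * B n - PA * B n).
  by ring.
by rewrite uu subrr mul0r.
Qed.

Lemma idem_prod_eq n (u : S) (F G : nat -> S) :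
  (forall a, u * F a = u * G a) -> u * \prod_(a < n) F a = u * \prod_(a < n) G a.
Proof.
move=> H; elim: n => [|n IH]; first by rewrite !big_ord0.
by rewrite !big_ord_recr /= mulrA IH mulrAC H mulrAC -mulrA.
Qed.

Lemma sqzero_prod1 n (w : S) (G : nat -> S) : w * w = 0 ->
  \prod_(a < n) (1 + w * G a) = 1 + w * \sum_(a < n) G a.
Proof.
move=> ww; elim: n => [|n IH]; first by rewrite big_ord0 big_ord0 mulr0 addr0.
rewrite big_ord_recr big_ord_recr /= IH.
have -> : (1 + w * \sum_(i < n) G i) * (1 + w * G n) =
  1 + w * (\sum_(i < n) G i + G n) + (w * w) * ((\sum_(i < n) G i) * G n) by ring.
by rewrite ww mul0r addr0.
Qed.

End ProdLemmas.

Section PartB.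
Variables (k : fieldType) (p : nat).
Hypothesis Hp : prime p.
Hypothesis Hp2 : (2 < p)%N.
Hypothesis Hch : p \in [pchar k].
Variables (C : comNzRingType) (iota : k -> C).
Hypothesis iotaD : forall u v, iota (u + v) = iota u + iota v.
Hypothesis iota1 : iota 1 = 1.
Local Notation S := (ser C).
Local Notation X := (sX C).

Lemma pC : p%:R = 0 :> C.
Proof. by rewrite -(iota_nat iotaD iota1) (pcharf0 Hch) (iota0 iotaD). Qed.

Lemma chC : p \in [pchar C].
Proof. by apply/andP; split => //; rewrite pC. Qed.

Lemma chS : p \in [pchar S].
Proof. by apply/andP; split => //; rewrite -cst_nat pC cst0. Qed.

Lemma pnC : [pchar C].-nat p. Proof. by rewrite pnatE // chC. Qed.
Lemma pnS : [pchar S].-nat p. Proof. by rewrite pnatE // chS. Qed.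

Lemma frobD (u v : C) : (u + v) ^+ p = u ^+ p + v ^+ p.
Proof. exact: exprDn_pchar pnC. Qed.
Lemma frobN (u : C) : (- u) ^+ p = - u ^+ p.
Proof. exact: exprNn_pchar pnC. Qed.

Lemma X0 m : (0 < m)%N -> (X ^+ m) 0%N = 0.
Proof. by move=> m0; apply: pow_low. Qed.

Lemma prodLin0 (w : C) :
  \prod_(a < p) (1 - cst ((a : nat)%:R + w) * X) = 1 - X ^+ p.-1 - cst (w ^+ p - w) * X ^+ p.
Proof.
pose iS := fun u : k => cst (iota u).
have iSD : forall u v, iS (u + v) = iS u + iS v by move=> u v; rewrite /iS iotaD cstD.
have iS1 : iS 1 = 1 by rewrite /iS iota1 cst1.
have := Hprod iSD iS1 p (1 - cst w * X) X.
rewrite prodXa // HXp; last exact: prime_gt1.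
have E : forall a : 'I_p, 1 - cst w * X - (a : nat)%:R * X = 1 - cst ((a : nat)%:R + w) * X.
  by move=> a; rewrite cstD cst_nat; ring.
rewrite (eq_bigr _ (fun a _ => E a)) => <-.
rewrite exprDn_pchar ?pnS // exprNn_pchar ?pnS // exprMn -cstX expr1n.
have -> : X ^+ p = X * X ^+ p.-1 by rewrite -exprS prednK // prime_gt0.
rewrite cstB; ring.
  exact: iSD. exact: iS1.
Qed.

Lemma prodLin (w : C) : w ^+ p = w ->
  \prod_(a < p) (1 - cst ((a : nat)%:R + w) * X) = 1 - X ^+ p.-1.
Proof. by move=> wp; rewrite prodLin0 wp subrr cst0 mul0r subr0. Qed.

Lemma E0 : (1 - X ^+ p.-1 : S) 0%N = 1.
Proof. by rewrite serB X0 ?subr0 // -ltnS prednK ?prime_gt1 ?prime_gt0. Qed.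


Lemma natmodp n : (n %% p)%:R = n%:R :> C.
Proof. by rewrite [in RHS](divn_eq n p) natrD natrM pC mulr0 add0r. Qed.

Lemma ord_predR (a : 'I_p) : ((ord_pred a : nat)%:R : C) = (a : nat)%:R - 1.
Proof.
rewrite /= natmodp; case: p pC (prime_gt0 Hp) a => // p' pC' _ a.
rewrite addnS /= natrD.
have -> : (p'%:R : C) = p'.+1%:R - 1 by rewrite -natr1; ring.
by rewrite pC'; ring.
Qed.

Lemma E0E0 : ((1 - X ^+ p.-1) * (1 - X ^+ p.-1) : S) 0%N = 1.
Proof. by rewrite serM big_ord1 E0 mulr1. Qed.

Variables (x y z : C).
Hypothesis hx : x ^+ p = x.
Hypothesis hy : y ^+ p = y.
Hypothesis hz : z ^+ 2 = (x + y) * z.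

Local Notation E := (1 - X ^+ p.-1 : S).

Lemma b1_one : \prod_(a < p) (sshift a (1 + cst x * X) : S) = 1.
Proof.
have F : forall a : 'I_p, (sshift a (1 + cst x * X) : S) * (1 - cst ((a : nat)%:R + 0) * X)
    = 1 - cst ((a : nat)%:R + (- x)) * X.
  move=> a; rewrite sshiftD sshift1 sshiftC sshiftX addr0.
  have G := geoE ((a : nat)%:R : C).
  transitivity ((1 - cst (a : nat)%:R * X) + cst x * X * ((1 - cst (a : nat)%:R * X) * geo (a : nat)%:R));
    first by ring.
  by rewrite G cstD cstN; ring.
apply: (@unit_cancel _ E); first exact: E0.
have P0 : \prod_(a < p) (1 - cst ((a : nat)%:R + 0) * X) = E.
  by apply: prodLin; rewrite expr0n gtn_eqF ?prime_gt0.
rewrite mul1r -P0 -big_split /= (eq_bigr _ (fun a _ => F a)) prodLin ?P0 //.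
by rewrite frobN hx.
Qed.


Local Notation q := (- x - 1).
Definition Aa (a : nat) : S := (1 - cst (a%:R + y) * X) * (1 - cst (a%:R + q) * X).

Lemma frobq : q ^+ p = q.
Proof. by rewrite frobD !frobN hx expr1n. Qed.
Lemma frobNx : (- x) ^+ p = - x.
Proof. by rewrite frobN hx. Qed.
Lemma frobym1 : (y - 1) ^+ p = y - 1.
Proof. by rewrite frobD frobN hy expr1n. Qed.

Lemma prodA : \prod_(a < p) Aa a = E * E.
Proof. by rewrite big_split /= !prodLin // frobq. Qed.

Lemma cst_mulC (u : C) (f g : S) : cst u * f * g = f * (cst u * g).
Proof. by ring. Qed.

Lemma key_e1 (e1 pi c : C) : c = x + y -> e1 * e1 = e1 -> pi * pi = pi ->
  e1 * z = e1 * (pi * c) ->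
  cst e1 * \prod_(a < p) (Aa a + cst z * X ^+ 2) = cst e1 * (E * E).
Proof.
move=> cE e11 pp ez.
rewrite (@idem_prod_eq _ p (cst e1) (fun a => Aa a + cst z * X ^+ 2) (fun a => Aa a + cst pi * (cst c * X ^+ 2))); last first.
  by move=> a; rewrite !mulrDr; congr (_ + _); rewrite !mulrA -!cstM ez !mulrA.
have SI := @split_idem _ p (cst pi) Aa (fun _ => cst c * X ^+ 2).
rewrite /= in SI; rewrite SI; last by rewrite -cstM pp.
rewrite prodA.
have -> : \prod_(a < p) (Aa a + cst c * X ^+ 2) =
    \prod_(a < p) ((1 - cst ((a : nat)%:R + (y - 1)) * X) * (1 - cst ((a : nat)%:R + - x) * X)).
  apply: eq_bigr => a _; rewrite /Aa cE !cstD !cstN cst1; ring.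
by rewrite big_split /= !prodLin ?frobym1 ?frobNx //; ring.
Qed.


Local Notation sinvS f := (sinv f : S).

Definition La (a : nat) : S := 1 - cst (a%:R + - x) * X.
Definition La' (a : nat) : S := 1 - cst (a%:R + q) * X.

Lemma sX0 : sX C 0%N = 0. Proof. by []. Qed.

Lemma La0 a : La a 0%N = 1.
Proof. by rewrite /La serB cst_mulE sX0 mulr0 subr0. Qed.
Lemma La'0 a : La' a 0%N = 1.
Proof. by rewrite /La' serB cst_mulE sX0 mulr0 subr0. Qed.

Lemma sum_inv0 : \sum_(a < p) sinvS (La a * La' a) = 0.
Proof.
apply: (@sX_reg C); rewrite mulr_sumr.
have H : forall a : 'I_p, X * sinvS (La a * La' a) = sinvS (La a) - sinvS (La' a).
  move=> a; apply: (@unit_cancel _ (La a * La' a)).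
    by rewrite serM big_ord1 La0 La'0 mulr1.
  have I1 := sinvE (La0 a); have I2 := sinvE (La'0 a).
  have I3 : (La a * La' a) * sinvS (La a * La' a) = 1.
    by apply: sinvE; rewrite serM big_ord1 La0 La'0 mulr1.
  transitivity (X * ((La a * La' a) * sinvS (La a * La' a))); first by ring.
  transitivity ((La a * sinvS (La a)) * La' a - (La' a * sinvS (La' a)) * La a); last by ring.
  rewrite I1 I2 I3 /La /La' !cstD !cstN ?cst1; ring.
rewrite (eq_bigr _ (fun a _ => H a)) sumrB.
have -> : \sum_(a < p) sinvS (La' a) = \sum_(a < p) sinvS (La (ord_pred a)).
  apply: eq_bigr => a _; congr sinv; rewrite /La /La' ord_predR; congr (1 - cst _ * X); ring.
have RI := reindex_inj (x := 0 : S) (op := +%R) (h := @ord_pred p) (P := xpredT) (F := fun i : 'I_p => sinvS (La i)) (@ord_pred_inj p).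
by rewrite /= in RI; rewrite -RI subrr.
Qed.

Lemma key_e0 (e0 c : C) : c = x + y -> e0 * e0 = e0 -> e0 * c = 0 ->
  cst e0 * \prod_(a < p) (Aa a + cst z * X ^+ 2) = cst e0 * (E * E).
Proof.
move=> cE ee ec.
pose z0 := e0 * z.
rewrite (@idem_prod_eq _ p (cst e0) (fun a => Aa a + cst z * X ^+ 2)
   (fun a => La a * La' a + cst z0 * X ^+ 2)); last first.
  move=> a; apply/eqP; rewrite -subr_eq0; apply/eqP.
  transitivity (cst (e0 * c) * (- X * La' a) + cst (e0 * z - e0 * z0) * X ^+ 2).
    rewrite /Aa /La /La' /z0 cE ?cstB !cstM !cstD !cstN ?cstM; ring.
  by rewrite ec /z0 mulrA ee subrr !cst0 !mul0r addr0.
have w2 : (cst z0 * X ^+ 2) * (cst z0 * X ^+ 2) = 0.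
  have zz : z0 * z0 = 0.
    by rewrite /z0 mulrACA ee -expr2 hz mulrA -cE ec mul0r.
  transitivity (cst (z0 * z0) * X ^+ 4); first by rewrite cstM; ring.
  by rewrite zz cst0 mul0r.
have F : forall a : 'I_p, La a * La' a + cst z0 * X ^+ 2
    = (La a * La' a) * (1 + cst z0 * X ^+ 2 * sinvS (La a * La' a)).
  move=> a; have I : (La a * La' a) * sinvS (La a * La' a) = 1.
    by apply: sinvE; rewrite serM big_ord1 La0 La'0 mulr1.
  transitivity (La a * La' a + cst z0 * X ^+ 2 * ((La a * La' a) * sinvS (La a * La' a)));
    first by rewrite I mulr1.
  by ring.
rewrite (eq_bigr _ (fun a _ => F a)) big_split /=.
have SQ := @sqzero_prod1 C p (cst z0 * X ^+ 2) (fun a => sinvS (La a * La' a)) w2.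
rewrite /= in SQ; rewrite SQ sum_inv0 mulr0 addr0 mulr1 big_split /=.
by rewrite /La /La' !prodLin ?frobNx ?frobq.
Qed.


Lemma key_prod : \prod_(a < p) (Aa a + cst z * X ^+ 2) = E * E.
Proof.
have [r pr] : exists r, p = r.+3 by exists (p - 3)%N; lia.
pose c := x + y.
have cp : c ^+ r.+3 = c by rewrite -pr /c frobD hx hy.
pose e1 := c ^+ r.+2; pose e0 := 1 - e1; pose pi := z * c ^+ r.+1.
have e1e1 : e1 * e1 = e1.
  rewrite /e1 -exprD (_ : (r.+2 + r.+2 = r.+3 + r.+1)%N); last by lia.
  by rewrite exprD cp -exprS.
have e0e0 : e0 * e0 = e0.
  transitivity (1 - e1 - e1 + e1 * e1); first by rewrite /e0; ring.
  by rewrite e1e1 /e0; ring.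
have e0c : e0 * c = 0.
  by rewrite /e0 /e1 mulrBl mul1r -exprSr cp subrr.
have pp : pi * pi = pi.
  transitivity (z ^+ 2 * c ^+ (r.+1 + r.+1)); first by rewrite /pi exprD; ring.
  rewrite hz -/c.
  transitivity (z * c ^+ (r.+3 + r)).
    rewrite (_ : (r.+3 + r = (r.+1 + r.+1).+1)%N); last by lia.
    by rewrite exprS; ring.
  by rewrite exprD cp -exprS.
have ez : e1 * z = e1 * (pi * c).
  transitivity (z * (e1 * e1)); last by rewrite /pi /e1 exprSr; ring.
  by rewrite e1e1 mulrC.
have -> : \prod_(a < p) (Aa a + cst z * X ^+ 2) =
   cst e0 * \prod_(a < p) (Aa a + cst z * X ^+ 2) + cst e1 * \prod_(a < p) (Aa a + cst z * X ^+ 2).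
  by rewrite -mulrDl -cstD /e0 subrK cst1 mul1r.
rewrite (@key_e0 e0 c) // (@key_e1 e1 pi c) //.
by rewrite -mulrDl -cstD /e0 subrK cst1 mul1r.
Qed.

Definition D2 : S := 1 + cst (- y) * X + cst z * (X ^+ 2 * geo q).

Lemma SaE (a : nat) : (sshift a D2 : S) * ((1 - cst a%:R * X) * (1 - cst (a%:R + q) * X))
   = Aa a + cst z * X ^+ 2.
Proof.
rewrite /D2 sshiftD sshiftD sshift1 sshiftC sshiftC sshiftX.
set s := (sshift a (X ^+ 2 * geo q) : S).
have G1 := geoE (a%:R : C); have G2 := sshiftX2 a q; have G3 := geoE (a%:R + q : C).
rewrite -/s in G2.
transitivity ((1 - cst a%:R * X) * (1 - cst (a%:R + q) * X)
   + cst (- y) * X * (1 - cst (a%:R + q) * X) * ((1 - cst a%:R * X) * geo a%:R)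
   + cst z * (1 - cst (a%:R + q) * X) * ((1 - cst a%:R * X) * s)); first by ring.
rewrite G1 G2.
transitivity ((1 - cst a%:R * X) * (1 - cst (a%:R + q) * X)
   + cst (- y) * X * (1 - cst (a%:R + q) * X)
   + cst z * X ^+ 2 * ((1 - cst (a%:R + q) * X) * geo (a%:R + q))); first by ring.
by rewrite G3 /Aa !cstD !cstN; ring.
Qed.

Lemma Sa0 (a : nat) : (sshift a D2 : S) 0%N = 1.
Proof. by rewrite sshift0 /D2 !serD ser1 !cst_mulE sX0 sX2E mulr0 mulr0 !addr0. Qed.

Lemma b2_one : \prod_(a < p) (sinv (sshift a D2) : S) = 1.
Proof.
have P1 : \prod_(a < p) (sshift a D2 : S) = 1.
  apply: (@unit_cancel _ (E * E)); first exact: E0E0.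
  rewrite mul1r.
  have P2 : \prod_(a < p) ((1 - cst (a : nat)%:R * X) * (1 - cst ((a : nat)%:R + q) * X)) = E * E.
    have P0 : \prod_(a < p) (1 - cst (a : nat)%:R * X) = E.
      rewrite -[RHS](prodLin (w := 0)); last by rewrite expr0n gtn_eqF ?prime_gt0.
      by apply: eq_bigr => a _; rewrite addr0.
    by rewrite big_split /= P0 prodLin ?frobq.
  rewrite -{1}P2 -big_split /=.
  rewrite (eq_bigr _ (fun (a : 'I_p) _ => SaE a)); exact: key_prod.
transitivity (\prod_(a < p) (sinv (sshift a D2) : S) * \prod_(a < p) (sshift a D2 : S)).
  by rewrite P1 mulr1.
rewrite -big_split /= big1 // => a _.
by rewrite mulrC; apply: sinvE; apply: Sa0.
Qed.

End PartB.

Section MapS.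
Variables (R1 R2 : nzRingType) (phi : R1 -> R2).
Hypothesis phiD : forall u v, phi (u + v) = phi u + phi v.
Hypothesis phiM : forall u v, phi (u * v) = phi u * phi v.
Hypothesis phi1 : phi 1 = 1.

Lemma phi0 : phi 0 = 0.
Proof. by apply: (addrI (phi 0)); rewrite -phiD !addr0. Qed.
Lemma phiN u : phi (- u) = - phi u.
Proof. by apply: (addrI (phi u)); rewrite -phiD !subrr phi0. Qed.
Lemma phiB u v : phi (u - v) = phi u - phi v.
Proof. by rewrite phiD phiN. Qed.
Lemma phi_nat n : phi n%:R = n%:R.
Proof. by elim: n => [|n IH]; rewrite ?phi0 // !mulrS phiD phi1 IH. Qed.
Lemma phiX u n : phi (u ^+ n) = phi u ^+ n.
Proof. by elim: n => [|n IH]; rewrite ?phi1 // !exprS phiM IH. Qed.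
Lemma phi_sum (I : Type) (r : seq I) (P : pred I) (F : I -> R1) :
  phi (\sum_(i <- r | P i) F i) = \sum_(i <- r | P i) phi (F i).
Proof. exact: (big_morph phi phiD phi0). Qed.

Definition mapS (f : nat -> R1) : nat -> R2 := fun n => phi (f n).

Lemma mapS_sone : mapS (@sone R1) = @sone R2.
Proof. by apply: funext => n; rewrite /mapS /sone phi_nat. Qed.
Lemma mapS_ssub f g : mapS (ssub f g) = ssub (mapS f) (mapS g).
Proof. by apply: funext => n; rewrite /mapS /ssub phiB. Qed.
Lemma mapS_smul f g : mapS (smul f g) = smul (mapS f) (mapS g).
Proof.
apply: funext => n; rewrite /mapS /smul phi_sum.
by apply: eq_bigr => i _; rewrite phiM.
Qed.
Lemma mapS_spow f m : mapS (spow f m) = spow (mapS f) m.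
Proof. by elim: m => [|m IH] /=; rewrite ?mapS_sone // mapS_smul IH. Qed.
Lemma mapS_sinv f : mapS (sinv f) = sinv (mapS f).
Proof.
apply: funext => n; rewrite /mapS /sinv phi_sum; apply: eq_bigr => m _.
by rewrite -mapS_sone -mapS_ssub -mapS_spow.
Qed.
Lemma mapS_sshift a f : mapS (sshift a f) = sshift a (mapS f).
Proof.
apply: funext => -[|n] //; rewrite /mapS /sshift /= phi_sum.
by apply: eq_bigr => r _; rewrite phiM phi_nat.
Qed.
Lemma mapS_bigsmul n (F : nat -> nat -> R1) :
  mapS (\big[@smul R1/@sone R1]_(a < n) F a) = \big[@smul R2/@sone R2]_(a < n) mapS (F a).
Proof. exact: (big_morph mapS mapS_smul mapS_sone). Qed.

End MapS.

Section Rels.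
Variables (R : nzRingType) (e : 'I_2 -> 'I_2 -> R).
Hypothesis UR : URel e.
Hypothesis h2 : forall u : R, u + u = 0 -> u = 0.
Local Notation x := (e 0 0).
Local Notation y := (e 1 1).
Local Notation a := (e 1 0).
Local Notation b := (e 0 1).

Ltac simp := rewrite /sgn /par /= ?(add0n, addn0, muln0, mul0n, muln1, mul1n, expr0, expr1,
  mul1r, mulr1, mul0r, mulr0, subr0, sub0r, mulN1r, opprK).

Lemma R1 : x * y = y * x.
Proof. by have := UR 0 0 1 1; simp; rewrite oppr0 => /eqP; rewrite subr_eq0 => /eqP. Qed.
Lemma R2 : x * a = a * x - a.
Proof. by have := UR 0 0 1 0; simp => H; rewrite -(subrK (a * x) (x * a)) H addrC. Qed.
Lemma R3 : x * b = b * x + b.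
Proof. by have := UR 0 0 0 1; simp => H; rewrite -(subrK (b * x) (x * b)) H addrC. Qed.
Lemma R4 : y * a = a * y + a.
Proof.
by have := UR 1 1 1 0; simp; rewrite addn1 sqrrN expr1n mul1r => H; rewrite -(subrK (a * y) (y * a)) H addrC.
Qed.
Lemma R5 : y * b = b * y - b.
Proof.
by have := UR 1 1 0 1; simp; rewrite addn1 sqrrN expr1n !mul1r => H; rewrite -(subrK (b * y) (y * b)) H addrC.
Qed.
Lemma R6 : a * b + b * a = y + x.
Proof. by have := UR 1 0 0 1; simp; rewrite mulNr opprK. Qed.
Lemma R7 : a * a = 0.
Proof. by apply: h2; have := UR 1 0 1 0; simp; rewrite mulNr opprK oppr0. Qed.

Lemma RaX m : a * x ^+ m = (x + 1) ^+ m * a.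
Proof.
elim: m => [|m IH]; first by rewrite !expr0 mulr1 mul1r.
rewrite exprSr mulrA IH -mulrA.
have -> : a * x = (x + 1) * a by rewrite mulrDl mul1r R2 subrK.
by rewrite mulrA -exprSr.
Qed.

Lemma RXb m : (- x) ^+ m * b = b * (- x - 1) ^+ m.
Proof.
elim: m => [|m IH]; first by rewrite !expr0 mulr1 mul1r.
rewrite exprS -mulrA IH mulrA.
have -> : (- x) * b = b * (- x - 1) by rewrite mulNr R3 opprD mulrBr mulrN mulr1.
by rewrite -mulrA -exprS.
Qed.

Lemma Rxz : x * (a * b) = (a * b) * x.
Proof. by rewrite mulrA R2 mulrBl -!mulrA R3 mulrDr addrK. Qed.
Lemma Ryz : y * (a * b) = (a * b) * y.
Proof. by rewrite mulrA R4 mulrDl -!mulrA R5 mulrBr subrK. Qed.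
Lemma Rzz : (a * b) * (a * b) = (x + y) * (a * b).
Proof.
have ba : b * a = y + x - a * b by rewrite -R6 [a * b + _]addrC addrK.
have ay : a * y = y * a - a by rewrite R4 addrK.
have ax : a * x = x * a + a by rewrite R2 subrK.
transitivity (a * (b * a) * b); first by rewrite !mulrA.
rewrite ba mulrBr mulrBl (mulrA a a) R7 mul0r mul0r subr0 mulrDr mulrDl ay ax.
rewrite mulrBl mulrDl -!mulrA [x * _ + _]addrC addrA subrK addrC mulrDl.
reflexivity.
Qed.

End Rels.

Section ImgSub.
Variables (k : fieldType) (Y U : algType k) (ev : Y -> U).
Hypothesis Hev : alg_hom ev.

Definition Ipred : {pred U} := fun u => `[< exists y, ev y = u >].
Lemma IpredP u : reflect (exists y, ev y = u) (u \in Ipred).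
Proof. exact: asboolP. Qed.

Lemma ev0 : ev 0 = 0.
Proof. case: Hev => D _; by apply: (addrI (ev 0)); rewrite -D !addr0. Qed.

Lemma Ipred_closed : GRing.subsemialg_closed Ipred.
Proof.
case: Hev => D [Z [O M]].
split.
- by apply/IpredP; exists 1.
- split; first by apply/IpredP; exists 0; exact: ev0.
  by move=> u v /IpredP[a <-] /IpredP[b <-]; apply/IpredP; exists (a + b).
- by move=> c u /IpredP[a <-]; apply/IpredP; exists (c *: a).
- by move=> u v /IpredP[a <-] /IpredP[b <-]; apply/IpredP; exists (a * b).
Qed.

Record Isub := MkI { ival : U; _ : ival \in Ipred }.
HB.instance Definition _ := [isSub for ival].
HB.instance Definition _ := [Choice of Isub by <:].
HB.instance Definition _ := GRing.SubChoice_isSubAlgebra.Build k U Ipred Isub Ipred_closed.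

Lemma ivalD (u w : Isub) : ival (u + w) = ival u + ival w. Proof. by []. Qed.
Lemma ivalM (u w : Isub) : ival (u * w) = ival u * ival w. Proof. by []. Qed.
Lemma ival1 : ival (1 : Isub) = 1. Proof. by []. Qed.
Lemma ivalZ c (u : Isub) : ival (c *: u) = c *: ival u. Proof. by []. Qed.
Lemma ivalN (u : Isub) : ival (- u) = - ival u. Proof. by []. Qed.
Lemma ival_nat n : ival (n%:R : Isub) = n%:R.
Proof. by elim: n => [//|n IH]; rewrite !mulrS ivalD IH. Qed.
Lemma ival_sgn n : ival (sgn Isub n) = sgn U n.
Proof. by rewrite /sgn; elim: n => [//|n IH]; rewrite !exprS ivalM IH ivalN ival1. Qed.

Lemma ev_surj (e : 'I_2 -> 'I_2 -> U) : is_Ugl11 e ->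
  (forall i j, exists y, ev y = e i j) -> surj ev.
Proof.
move=> [UR [Uex Uun]] He.
have ein : forall i j, e i j \in Ipred by move=> i j; apply/IpredP.
pose eI i j : Isub := MkI (ein i j).
have URI : URel eI.
  move=> i j a b; apply: val_inj => /=.
  rewrite !(ivalD, ivalM, ivalN, ival_sgn, ival_nat) /=.
  exact: UR.
have [f [fh fe]] := Uex _ eI URI.
have gh : alg_hom (fun u => ival (f u)).
  case: fh => D [Z [O M]]; split; first by move=> u v; rewrite D.
  split; first by move=> c u; rewrite Z.
  by split; [rewrite O | move=> u v; rewrite M].
have idh : alg_hom (fun u : U => u) by [].
have ag : forall i j, ival (f (e i j)) = e i j by move=> i j; rewrite fe.
move=> u; have := Uun U _ _ gh idh ag u => H.
have : u \in Ipred by rewrite -H; case: (f u).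
by case/IpredP => y <-; exists y.
Qed.

End ImgSub.

Lemma smul_at1l (R : nzRingType) (f g : nat -> R) n :
  f 0%N = 0 -> (forall m, f m.+2 = 0) ->
  smul f g n = if n is n'.+1 then f 1%N * g n' else 0.
Proof.
move=> f0 f2; rewrite /smul; case: n => [|n].
  by rewrite big_ord1 f0 mul0r.
rewrite big_ord_recl f0 mul0r add0r big_ord_recl /= subSS subn0.
rewrite big1 ?addr0 // => i _.
by rewrite /bump /= add1n f2 mul0r.
Qed.

Lemma smul_at1r (R : nzRingType) (f g : nat -> R) n :
  g 0%N = 0 -> (forall m, g m.+2 = 0) ->
  smul f g n = if n is n'.+1 then f n' * g 1%N else 0.
Proof.
move=> g0 g2; rewrite /smul; case: n => [|n].
  by rewrite big_ord1 g0 mulr0.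
rewrite big_ord_recr /= subnn g0 mulr0 addr0.
rewrite big_ord_recr /= (_ : (n.+1 - n = 1)%N); last by lia.
rewrite big1 ?add0r // => i _.
have : (n.+1 - i = (n - i).+1.+1 - 1)%N.
  by have := ltn_ord i; lia.
move=> ->; have : ((n - i).+1.+1 - 1 = (n - i).+1)%N by lia.
move=> ->.
have -> : (n - i = (n - i.+1).+1)%N by have := ltn_ord i; lia.
by rewrite g2 mulr0.
Qed.

Section Main.
Variables (k : fieldType) (p : nat).
Hypothesis Hp : prime p.
Hypothesis Hp2 : (2 < p)%N.
Hypothesis Hch : p \in [pchar k].
Variables (Up : algType k) (eps : 'I_2 -> 'I_2 -> Up).
Hypothesis UR : URel eps.
Hypothesis h2 : forall u : Up, u + u = 0 -> u = 0.
Hypothesis epsp : forall i, eps i i ^+ p = eps i i.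

Local Notation x0 := (eps 0 0).
Local Notation y0 := (eps 1 1).
Local Notation a0 := (eps 1 0).
Local Notation b0 := (eps 0 1).
Local Notation z0 := (eps 1 0 * eps 0 1).

Lemma xy : x0 * y0 = y0 * x0. Proof. exact: R1. Qed.
Lemma xz : x0 * z0 = z0 * x0. Proof. exact: Rxz. Qed.
Lemma yz : y0 * z0 = z0 * y0. Proof. exact: Ryz. Qed.

Definition comm3 (v : Up) := v * x0 = x0 * v /\ v * y0 = y0 * v /\ v * z0 = z0 * v.
Definition Cpred : {pred Up} := fun u => `[< forall v, comm3 v -> u * v = v * u >].

Lemma CpredP u : reflect (forall v, comm3 v -> u * v = v * u) (u \in Cpred).
Proof. exact: asboolP. Qed.

Lemma Cpred_closed : subring_closed Cpred.
Proof.
split.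
- by apply/CpredP => v _; rewrite mul1r mulr1.
- move=> u w /CpredP hu /CpredP hw; apply/CpredP => v hv.
  by rewrite mulrBl mulrBr hu ?hw.
- move=> u w /CpredP hu /CpredP hw; apply/CpredP => v hv.
  by rewrite -mulrA hw // mulrA hu // mulrA.
Qed.

Record Csub := MkC { cval : Up; _ : cval \in Cpred }.
HB.instance Definition _ := [isSub for cval].
HB.instance Definition _ := [Choice of Csub by <:].
HB.instance Definition _ := GRing.SubChoice_isSubNzRing.Build Up Cpred Csub Cpred_closed.

Lemma Csub_comm : commutative (@GRing.mul Csub).
Proof.
move=> [u hu] [w hw]; apply: val_inj => /=.
move/CpredP: hu => hu; apply: hu.
move/CpredP: hw => hw.
have hx : comm3 x0 by split; [|split]; rewrite ?xy ?xz.
have hy : comm3 y0 by split; [|split]; rewrite ?xy ?yz.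
have hz : comm3 z0 by split; [|split]; rewrite ?xz ?yz.
by split; [apply: hw|split; apply: hw].
Qed.
HB.instance Definition _ := GRing.PzRing_hasCommutativeMul.Build Csub Csub_comm.

Lemma x_in : x0 \in Cpred. Proof. by apply/CpredP => v [hx _]. Qed.
Lemma y_in : y0 \in Cpred. Proof. by apply/CpredP => v [_ [hy _]]. Qed.
Lemma z_in : z0 \in Cpred. Proof. by apply/CpredP => v [_ [_ hz]]. Qed.
Lemma alg_in (c : k) : c%:A \in Cpred.
Proof. by apply/CpredP => v _; rewrite mulr_algl mulr_algr. Qed.

Definition xc : Csub := MkC x_in.
Definition yc : Csub := MkC y_in.
Definition zc : Csub := MkC z_in.
Definition iotaC (c : k) : Csub := MkC (alg_in c).

Lemma cvalD (u w : Csub) : cval (u + w) = cval u + cval w. Proof. by []. Qed.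
Lemma cvalM (u w : Csub) : cval (u * w) = cval u * cval w. Proof. by []. Qed.
Lemma cval1 : cval (1 : Csub) = 1. Proof. by []. Qed.

Lemma iotaCD u v : iotaC (u + v) = iotaC u + iotaC v.
Proof. by apply: val_inj; rewrite /= scalerDl. Qed.
Lemma iotaC1 : iotaC 1 = 1.
Proof. by apply: val_inj; rewrite /= scale1r. Qed.

Lemma hxc : xc ^+ p = xc.
Proof. by apply: val_inj; change (cval (xc ^+ p) = x0); rewrite (phiX cvalM cval1) epsp. Qed.
Lemma hyc : yc ^+ p = yc.
Proof. by apply: val_inj; change (cval (yc ^+ p) = y0); rewrite (phiX cvalM cval1) epsp. Qed.
Lemma hzc : zc ^+ 2 = (xc + yc) * zc.
Proof.
apply: val_inj; change (cval (zc ^+ 2) = (x0 + y0) * z0).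
by rewrite (phiX cvalM cval1) expr2 Rzz.
Qed.


Variables (Y : nzRingType) (phi : Y -> Up).
Hypothesis phiD : forall u v, phi (u + v) = phi u + phi v.
Hypothesis phiM : forall u v, phi (u * v) = phi u * phi v.
Hypothesis phi1 : phi 1 = 1.
Variable t : 'I_2 -> 'I_2 -> nat -> Y.
Hypothesis Ht1 : forall i j, phi (t i j 1%N) = sgn Up (par i) * eps i j.
Hypothesis Ht2 : forall i j r, (2 <= r)%N -> phi (t i j r) = 0.

Local Notation T i j := (mapS phi (tser t i j)).
Local Notation S := (ser Csub).
Local Notation X := (sX Csub).

Lemma T0 i j : T i j 0%N = (i == j)%:R.
Proof. by rewrite /mapS /tser /= (phi_nat phiD phi1). Qed.
Lemma T1 i j : T i j 1%N = sgn Up (par i) * eps i j.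
Proof. by rewrite /mapS /tser /= Ht1. Qed.
Lemma T2 i j m : T i j m.+2 = 0.
Proof. by rewrite /mapS /tser /= Ht2. Qed.

Definition D1 : S := 1 + cst xc * X.
Lemma D1_0 : D1 0%N = 1.
Proof. by rewrite /D1 serD ser1 cst_mulE /= mulr0 addr0. Qed.
Lemma D1_1 : D1 1%N = xc.
Proof. by rewrite /D1 serD ser1 cst_mulE /= mulr1 add0r. Qed.
Lemma D1_2 m : D1 m.+2 = 0.
Proof. by rewrite /D1 serD ser1 cst_mulE /= mulr0 addr0. Qed.

Lemma hD1 : mapS phi (d1ser t) = mapS cval D1.
Proof.
apply: funext => -[|[|m]]; rewrite /d1ser.
- by rewrite T0 /mapS D1_0.
- by rewrite T1 /mapS D1_1 /sgn /par /= expr0 mul1r.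
- by rewrite T2 /mapS D1_2.
Qed.

Lemma sinvD1 : (sinv D1 : S) = geo (- xc).
Proof.
have I1 : D1 * sinv D1 = 1 := sinvE D1_0.
have I2 : D1 * geo (- xc) = 1.
  by have G := geoE (- xc); rewrite cstN mulNr opprK in G; exact: G.
by apply: (unit_cancel D1_0); rewrite mulrC I1 mulrC I2.
Qed.

Lemma D2_0 : (D2 xc yc zc) 0%N = 1.
Proof. by rewrite /D2 !serD ser1 !cst_mulE sX2E /= mulr0 mulr0 !addr0. Qed.
Lemma D2_1 : (D2 xc yc zc) 1%N = - yc.
Proof. by rewrite /D2 !serD ser1 !cst_mulE sX2E /= mulr0 mulr1 add0r addr0. Qed.
Lemma D2_2 m : (D2 xc yc zc) m.+2 = zc * (- xc - 1) ^+ m.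
Proof. by rewrite /D2 !serD ser1 !cst_mulE sX2E /= mulr0 add0r add0r. Qed.

Lemma hD2 : mapS phi (d2ser t) = mapS cval (D2 xc yc zc).
Proof.
rewrite /d2ser (mapS_ssub phiD) !(mapS_smul phiD phiM) (mapS_sinv phiD phiM phi1).
rewrite (hD1 : mapS phi (tser t 0 0) = _) -(mapS_sinv cvalD cvalM cval1) sinvD1.
apply: funext => n; rewrite /ssub.
rewrite smul_at1r; last by move=> m; rewrite T2.
  2: by rewrite T0.
case: n => [|n].
  by rewrite subr0 T0 /mapS D2_0.
rewrite smul_at1l; last by move=> m; rewrite T2.
  2: by rewrite T0.
case: n => [|m].
  by rewrite mul0r subr0 T1 /mapS D2_1 /sgn /par /= expr1 mulN1r.
rewrite T2 T1 T1 /mapS D2_2 /geo /sgn /par /= expr0 expr1 mulN1r mul1r sub0r.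
rewrite !(phiX cvalM cval1) !mulNr opprK -mulrA.
have -> : cval (- xc - 1) = - x0 - 1 by [].
have -> : cval (- xc) = - x0 by [].
by rewrite RXb // mulrA.
Qed.

Lemma bridge (i : 'I_2) n : (0 < n)%N -> phi (bser p t i n) = 0.
Proof.
move=> n0.
have H : mapS phi (bser p t i) = mapS cval (1 : S).
  rewrite /bser; case: ifP => _.
    rewrite (mapS_bigsmul phiD phiM phi1 p (fun a => sshift a (d1ser t))).
    under eq_bigr do rewrite (mapS_sshift phiD phiM phi1) hD1 -(mapS_sshift cvalD cvalM cval1).
    rewrite -(mapS_bigsmul cvalD cvalM cval1 p (fun a => sshift a D1)).
    by congr (mapS cval _); exact: (b1_one Hp Hch iotaCD iotaC1 hxc).
  rewrite (mapS_bigsmul phiD phiM phi1 p (fun a => sinv (sshift a (d2ser t)))).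
  under eq_bigr do rewrite (mapS_sinv phiD phiM phi1) (mapS_sshift phiD phiM phi1) hD2
     -(mapS_sshift cvalD cvalM cval1) -(mapS_sinv cvalD cvalM cval1).
  rewrite -(mapS_bigsmul cvalD cvalM cval1 p (fun a => sinv (sshift a (D2 xc yc zc)))).
  by congr (mapS cval _); exact: (b2_one Hp Hp2 Hch iotaCD iotaC1 hxc hyc hzc).
have := congr1 (fun f => f n) H; rewrite /mapS /= => ->.
by rewrite ser1 (_ : (n == 0)%N = false) //; apply/negbTE; rewrite -lt0n.
Qed.

End Main.

Unset Implicit Arguments.

Theorem lemma2p7 (k : closedFieldType) (p : nat)
  (Hp : prime p) (Hp2 : (2 < p)%N) (Hchar : p \in [pchar k])
  (Y : algType k) (t : 'I_2 -> 'I_2 -> nat -> Y) (HY : is_Yangian t)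
  (U : algType k) (e : 'I_2 -> 'I_2 -> U) (HU : is_Ugl11 e)
  (ev : Y -> U) (Hev : alg_hom ev)
  (Hev1 : forall i j, ev (t i j 1%N) = sgn U (par i) * e i j)
  (Hev2 : forall i j r, (2 <= r)%N -> ev (t i j r) = 0)
  (* Y^[p] = Y / Y Z_p(Y)_+ *)
  (Yp : algType k) (piY : Y -> Yp) (HpiY : alg_hom piY) (HpiYs : surj piY)
  (HkerY : forall y, piY y = 0 <->
     in_lideal (fun z => exists (i : 'I_2) (r : nat), (0 < r)%N /\
                          z = bser p t i (r * p)%N) y)
  (* U^[p](gl_{1|1}) = U / J_p *)
  (Up : algType k) (piU : U -> Up) (HpiU : alg_hom piU) (HpiUs : surj piU)
  (HkerU : forall x, piU x = 0 <->
     in_ideal (fun z => exists i : 'I_2, z = e i i ^+ p - e i i) x) :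
  exists evp : Yp -> Up,
    alg_hom evp /\ surj evp /\ forall y, evp (piY y) = piU (ev y).
Proof.
have evH := Hev; case: Hev => evD [evZ [ev1 evM]].
case: HpiU => uD [uZ [u1 uM]].
case: HpiY => yD [yZ [y1 yM]].
have sgnH : forall (A B : algType k) (f : A -> B), (forall u v, f (u + v) = f u + f v) ->
    (forall u v, f (u * v) = f u * f v) -> f 1 = 1 -> forall n, f (sgn A n) = sgn B n.
  by move=> A B f fD fM f1 n; rewrite /sgn (phiX fM f1) (phiN fD) f1.
pose eps := fun i j => piU (e i j).
have UR : URel eps.
  move=> i j a b; have := congr1 piU (HU.1 i j a b).
  by rewrite !(phiB uD) !uM !(sgnH _ _ _ uD uM u1) !(phi_nat uD u1).
have h2 : forall u : Up, u + u = 0 -> u = 0.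
  move=> u; rewrite -mulr2n -scaler_nat => H.
  have n2 : (2%:R : k) != 0.
    rewrite -(dvdn_pcharf Hchar); apply/negP => /dvdn_leq => /(_ isT).
    by rewrite leqNgt Hp2.
  by rewrite -[u]scale1r -(mulVf n2) -scalerA H scaler0.
have epsp : forall i, eps i i ^+ p = eps i i.
  move=> i; apply/eqP; rewrite -subr_eq0; apply/eqP.
  have : piU (e i i ^+ p - e i i) = 0.
    apply/HkerU; exists 1%N, (fun _ => 1), (fun _ => e i i ^+ p - e i i), (fun _ => 1).
    by split; [move=> m; exists i | rewrite big_ord1 mul1r mulr1].
  by rewrite (phiB uD) (phiX uM u1).
pose phi := fun y => piU (ev y).
have phiD : forall u v, phi (u + v) = phi u + phi v by move=> u v; rewrite /phi evD uD.
have phiM : forall u v, phi (u * v) = phi u * phi v by move=> u v; rewrite /phi evM uM.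
have phi1 : phi 1 = 1 by rewrite /phi ev1 u1.
have Ht1 : forall i j, phi (t i j 1%N) = sgn Up (par i) * eps i j.
  by move=> i j; rewrite /phi Hev1 uM (sgnH _ _ _ uD uM u1).
have Ht2 : forall i j r, (2 <= r)%N -> phi (t i j r) = 0.
  by move=> i j r r2; rewrite /phi Hev2 // (phi0 uD).
have br := bridge Hp Hp2 Hchar UR h2 epsp phiD phiM phi1 Ht1 Ht2.
have ker : forall y, piY y = 0 -> phi y = 0.
  move=> y /HkerY [n [a [g [Hg ->]]]]; rewrite (phi_sum phiD) big1 // => m _.
  have [i [r [r0 ->]]] := Hg m.
  by rewrite phiM br ?mulr0 // muln_gt0 r0 prime_gt0.
pose sec := fun w => proj1_sig (cid (HpiYs w)).
have secE : forall w, piY (sec w) = w by move=> w; exact: (proj2_sig (cid (HpiYs w))).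
pose evp := fun w => phi (sec w).
have wd : forall y w, piY y = w -> evp w = phi y.
  move=> y w E; apply/eqP; rewrite -subr_eq0 -(phiB phiD); apply/eqP; apply: ker.
  by rewrite (phiB yD) secE E subrr.
exists evp; split; [|split].
- split; first by move=> u v; rewrite (wd (sec u + sec v)) ?phiD // yD !secE.
  split; first by move=> c u; rewrite (wd (c *: sec u)) ?yZ ?secE // /phi evZ uZ.
  split; first by rewrite (wd 1) ?phi1.
  by move=> u v; rewrite (wd (sec u * sec v)) ?phiM // yM !secE.
- move=> z; have [u <-] := HpiUs z.
  have He : forall i j, exists y, ev y = e i j.
    move=> i j; exists (sgn Y (par i) * t i j 1%N).
    rewrite evM Hev1 (sgnH _ _ _ evD evM ev1) mulrA /sgn -expr2 sqrr_sign mul1r //.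
  have [y <-] := ev_surj evH HU He u.
  by exists (piY y); apply: wd.
- by move=> y; apply: wd.
Qed.
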